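(* Let $F,\theta \geq 1$ be integers with $F \geq 4\theta$, and let $p_j = \binom{F}{j} 2^{-F}$ for $j = 0,\ldots,F$. Then $$\sum_{j \leq \theta} (-j)\, p_j + \sum_{\theta < j \leq F} \big(j + 2(1 - j/F - \theta)\big) p_j > 0.$$
   Context: This quantity is the expected value $E\phi(e)$ of the weight $\phi(e) = -\zeta_0(e)$ if $\zeta_0(e) \leq \theta$ and $\phi(e) = \zeta_0(e) + 2(X - \theta)$ otherwise, where $\zeta_0(e) \sim \mathrm{Binomial}(F,1/2)$ and, given $\zeta_0(e)$, $X$ is Bernoulli$(1 - \zeta_0(e)/F)$. *)

(* Defs.v *)
From mathcomp Require Import all_boot all_order all_algebra.
Set Implicit Arguments. Unset Strict Implicit. Unset Printing Implicit Defensive.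
Import Order.TTheory GRing.Theory Num.Theory.
Local Open Scope ring_scope.

Definition pj (F j : nat) : rat := ('C(F, j))%:R / 2%:R ^+ F.

(* Main.v *)
Require Import Defs.
From mathcomp Require Import all_boot all_order all_algebra.
From mathcomp Require Import ring lra zify.
Import Order.TTheory GRing.Theory Num.Theory.
Local Open Scope ring_scope.

Lemma sumC (n : nat) : (\sum_(0 <= j < n.+1) 'C(n, j) = 2 ^ n)%N.
Proof.
rewrite big_mkord -[2%N]/(1 + 1)%N expnDn; apply: eq_bigr => i _.
by rewrite !exp1n !muln1.
Qed.

Lemma sumjC (n : nat) : (\sum_(0 <= j < n.+2) j * 'C(n.+1, j) = n.+1 * 2 ^ n)%N.
Proof.
rewrite big_nat_recl // mul0n add0n -sumC big_distrr /=.
by apply: eq_bigr => j _; rewrite -mul_bin_diag.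
Qed.

Theorem lemma5 (F theta : nat) :
  (1 <= F)%N -> (1 <= theta)%N -> (4 * theta <= F)%N ->
  0 < \sum_(0 <= j < F.+1 | (j <= theta)%N) (- (j%:R : rat)) * pj F j
      + \sum_(0 <= j < F.+1 | (theta < j)%N)
          ((j%:R : rat) + 2%:R * (1 - j%:R / F%:R - theta%:R)) * pj F j.
Proof.
move=> F1 th1 hF.
have [n eF] : exists n, F = n.+1 by case: F F1 hF => [//|n]; exists n.
rewrite (big_mkcond (fun j => (j <= theta)%N)) (big_mkcond (fun j => (theta < j)%N)) /=.
rewrite -big_split /=.
pose t := fun j : nat => (if (j <= theta)%N then - (j%:R : rat) * pj F j else 0) +
     (if (theta < j)%N then ((j%:R : rat) + 2%:R * (1 - j%:R / F%:R - theta%:R)) * pj F j else 0).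
change (0 < \sum_(0 <= j < F.+1) t j).
set g := fun j : nat => ((j%:R : rat) - 2%:R * theta%:R) * pj F j.
have Pge0 j : 0 <= pj F j by rewrite /pj divr_ge0 // exprn_ge0.
have P0 : 0 < pj F 0 by rewrite /pj bin0 divr_gt0 // exprn_gt0.
have tg j : (j <= F)%N -> g j <= t j.
  move=> jF; rewrite /t /g; case: leqP => hj.
    rewrite /= addr0 ler_wpM2r //.
    have : (j%:R : rat) <= theta%:R by rewrite ler_nat.
    lra.
  rewrite /= add0r ler_wpM2r //.
  have : (j%:R : rat) / F%:R <= 1.
    rewrite ler_pdivrMr ?ltr0n // mul1r ler_nat //.
  lra.
have sg : 0 <= \sum_(0 <= j < F.+1) g j.
  rewrite eF in hF *.
  have -> : \sum_(0 <= j < n.+2) g j =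
     (((\sum_(0 <= j < n.+2) j * 'C(n.+1, j))%N)%:R
      - ((2 * theta * \sum_(0 <= j < n.+2) 'C(n.+1, j))%N)%:R) / 2%:R ^+ n.+1.
    rewrite big_distrr /= !natr_sum -sumrB mulr_suml; apply: eq_bigr => j _.
    by rewrite /g /pj eF !natrM mulrA mulrBl.
  rewrite sumjC sumC divr_ge0 ?exprn_ge0 // subr_ge0 ler_nat expnS.
  rewrite mulnA leq_mul2r; apply/orP; right; lia.
rewrite big_nat_recl // in sg; rewrite big_nat_recl //.
have t0 : t 0%N = 0 by rewrite /t /= oppr0 mul0r addr0.
have g0 : g 0%N < 0.
  by rewrite /g pmulr_llt0 // sub0r oppr_lt0 mulr_gt0 // ltr0n th1.
have : \sum_(0 <= i < F) g i.+1 <= \sum_(0 <= i < F) t i.+1.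
  rewrite !big_nat; apply: ler_sum => i /andP [_ hi]; apply: tg; lia.
lra.
Qed.
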